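(* A C*-algebra $A$ is AF if and only if there exists a map $\rho\colon A\to A$ such that $\|a-\rho(a)\|<1$ for every $a\in A$ and $C^*(\{\rho(a)\}_{a\in F})$ is finite-dimensional for every finite subset $F$ of $A$.
   Context: A C*-algebra is AF if it has a directed family of finite-dimensional C*-subalgebras with dense union. $C^*(S)$ denotes the C*-subalgebra generated by $S$. The map $\rho$ is an arbitrary function (not assumed linear or continuous). *)

(* Defs.v *)
From HB Require Import structures.
From mathcomp Require Import all_boot all_order all_algebra.
From mathcomp Require Import all_classical all_reals all_analysis.
From mathcomp Require Import complex.
Set Implicit Arguments. Unset Strict Implicit. Unset Printing Implicit Defensive.
Import Order.TTheory GRing.Theory Num.Theory.
Import numFieldNormedType.Exports.
Local Open Scope classical_set_scope.
Local Open Scope ring_scope.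

Section Cstar.
Variables (R : realType) (A : completeNormedModType R[i]).
Variables (mul : A -> A -> A) (star : A -> A).

Record is_Cstar_algebra : Prop := IsCstar {
  mulA : forall x y z, mul x (mul y z) = mul (mul x y) z;
  mulDl : forall x y z, mul (x + y) z = mul x z + mul y z;
  mulDr : forall x y z, mul x (y + z) = mul x y + mul x z;
  mulZl : forall (c : R[i]) x y, mul (c *: x) y = c *: mul x y;
  mulZr : forall (c : R[i]) x y, mul x (c *: y) = c *: mul x y;
  starD : forall x y, star (x + y) = star x + star y;
  starZ : forall (c : R[i]) x, star (c *: x) = (c^*)%C *: star x;
  starK : forall x, star (star x) = x;
  starM : forall x y, star (mul x y) = mul (star y) (star x);
  norm_mul : forall x y, `|mul x y| <= `|x| * `|y|;
  Cstar_identity : forall x, `|mul (star x) x| = `|x| ^+ 2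
}.

Definition star_subalgebra (B : set A) : Prop :=
  [/\ B 0,
      (forall x y, B x -> B y -> B (x + y)),
      (forall (c : R[i]) x, B x -> B (c *: x)),
      (forall x y, B x -> B y -> B (mul x y)) &
      (forall x, B x -> B (star x))].

Definition Cstar_subalgebra (B : set A) : Prop :=
  star_subalgebra B /\ closed B.

Definition Cstar_gen (S : set A) : set A :=
  \bigcap_(B in [set B | Cstar_subalgebra B /\ S `<=` B]) B.

Definition span_seq (s : seq A) : set A :=
  [set x | exists c : 'I_(size s) -> R[i],
             x = \sum_(i < size s) c i *: nth 0 s i].

Definition finite_dimensional (B : set A) : Prop :=
  exists s : seq A, B `<=` span_seq s.

Definition is_AF : Prop :=
  exists F : set (set A),
    [/\ (forall B, F B -> Cstar_subalgebra B /\ finite_dimensional B),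
        (forall B1 B2, F B1 -> F B2 ->
            exists2 B3, F B3 & B1 `<=` B3 /\ B2 `<=` B3) &
        closure (\bigcup_(B in F) B) = setT].
End Cstar.

(* Main.v *)
Require Import Defs.
From HB Require Import structures.
From mathcomp Require Import all_boot all_order all_algebra.
From mathcomp Require Import all_classical all_reals all_analysis.
From mathcomp Require Import complex.
Import Order.TTheory GRing.Theory Num.Theory.
Import numFieldNormedType.Exports.
Local Open Scope classical_set_scope.
Local Open Scope ring_scope.

Section Aux.
Set Implicit Arguments.
Variables (R : realType) (A : completeNormedModType R[i]).
Variables (mul : A -> A -> A) (star : A -> A).

Lemma Cgen_sub (S B : set A) : Cstar_subalgebra mul star B -> S `<=` B ->
  Cstar_gen mul star S `<=` B.
Proof. by move=> HB HS x; apply; split. Qed.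

Lemma Cgen_incl (S : set A) : S `<=` Cstar_gen mul star S.
Proof. by move=> x Sx B [_ HB]; apply: HB. Qed.

Lemma Cgen_Cstar (S : set A) : Cstar_subalgebra mul star (Cstar_gen mul star S).
Proof.
split; last by apply: closed_bigI => B [[_ +] _].
split.
- by move=> B [[[? _ _ _ _] _] _].
- by move=> x y Hx Hy B HB; case: (HB) => [[[_ Hd _ _ _] _] _]; apply: Hd; [apply: Hx|apply: Hy].
- by move=> c x Hx B HB; case: (HB) => [[[_ _ Hd _ _] _] _]; apply: Hd; apply: Hx.
- by move=> x y Hx Hy B HB; case: (HB) => [[[_ _ _ Hd _] _] _]; apply: Hd; [apply: Hx|apply: Hy].
- by move=> x Hx B HB; case: (HB) => [[[_ _ _ _ Hd] _] _]; apply: Hd; apply: Hx.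
Qed.

Lemma Cgen_mono (S T : set A) : S `<=` T ->
  Cstar_gen mul star S `<=` Cstar_gen mul star T.
Proof.
move=> ST; apply: Cgen_sub; first exact: Cgen_Cstar.
by move=> x /ST; apply: Cgen_incl.
Qed.
End Aux.

Theorem lemma6p1 (R : realType) (A : completeNormedModType R[i])
    (mul : A -> A -> A) (star : A -> A) :
  is_Cstar_algebra mul star ->
  (is_AF mul star <->
   exists rho : A -> A,
     (forall a : A, `|a - rho a| < 1) /\
     (forall F : set A, finite_set F ->
        finite_dimensional (Cstar_gen mul star (rho @` F)))).
Proof.
move=> _; split.
- move=> [F [HF Hdir Hdense]].
  have Hex : forall a : A, exists p : set A * A, [/\ F p.1, p.1 p.2 & `|a - p.2| < 1].
    move=> a; have : closure (\bigcup_(B in F) B) a by rewrite Hdense.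
    move=> /(_ (ball a 1) (nbhsx_ballx a 1 ltr01)) [x [[B FB Bx] bx]].
    exists (B, x); split => //.
    by move: bx; rewrite -ball_normE.
  pose pick a := proj1_sig (cid (Hex a)).
  have pickP a : [/\ F (pick a).1, (pick a).1 (pick a).2 & `|a - (pick a).2| < 1].
    exact: (proj2_sig (cid (Hex a))).
  exists (fun a => (pick a).2); split; first by move=> a; case: (pickP a).
  have Hs : forall s : seq A, exists2 B, F B & forall a, a \in s -> (pick a).1 `<=` B.
    elim => [|a s [B FB HB]].
      by exists (pick 0).1 => //; case: (pickP 0).
    case: (pickP a) => Fa _ _.
    have [B3 FB3 [H1 H2]] := Hdir _ _ Fa FB.
    exists B3 => // x; rewrite in_cons => /orP [/eqP -> //|xs].
    by move=> y /(HB _ xs) /H2.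
  move=> G /finite_seqP [s ->].
  have [B FB HB] := Hs s.
  have [CB [s' Hs']] := HF _ FB.
  exists s'; apply: subset_trans Hs'.
  apply: Cgen_sub => // y [a sa <-].
  by apply: (HB _ sa); case: (pickP a).
- move=> [rho [Hrho Hfin]].
  exists [set B | exists G, finite_set G /\ B = Cstar_gen mul star (rho @` G)]; split.
  + move=> B [G [fG ->]]; split; [exact: Cgen_Cstar | exact: Hfin].
  + move=> B1 B2 [G1 [f1 ->]] [G2 [f2 ->]].
    exists (Cstar_gen mul star (rho @` (G1 `|` G2))).
      by exists (G1 `|` G2); split => //; rewrite finite_setU.
    by split; apply: Cgen_mono; apply: image_subset => x /= Hx; [left|right].
  + apply/seteqP; split => // a _ N /nbhs_ballP [e /= e0 HN].
    pose s := e / 2.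
    have s0 : 0 < s by rewrite divr_gt0.
    have sn0 : s != 0 by rewrite gt_eqF.
    exists (s *: rho (s^-1 *: a)); split.
      exists (Cstar_gen mul star (rho @` [set s^-1 *: a])).
        by exists [set s^-1 *: a]; split => //; exact: finite_set1.
      have [[_ _ HZ _ _] _] := @Cgen_Cstar _ _ mul star (rho @` [set s^-1 *: a]).
      by apply: HZ; apply: Cgen_incl; exists (s^-1 *: a).
    apply: HN; rewrite -ball_normE /=.
    have -> : a - s *: rho (s^-1 *: a) = s *: (s^-1 *: a - rho (s^-1 *: a)).
      by rewrite scalerBr scalerA mulfV // scale1r.
    rewrite normrZ gtr0_norm //.
    apply: (lt_trans (y := s)).
      by rewrite -[X in _ < X]mulr1 ltr_pM2l.
    by rewrite /s ltr_pdivrMr // ltr_pMr // ltr1n.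
Qed.
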